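(* Let $M$ be a finite abelian group of order $m$ and $J$ a Jacobi function on $M$. Suppose $i\colon\hat{M}\to\hat{M}$ is a bijection with $i(x)=x\,i(x^{-1})$ for all $x\in\hat{M}$, such that $J(\alpha,\beta)=\frac{1}{m}\sum_{x\in\hat{M}}\alpha(i(x))\beta(i(x)x^{-1})$ for all $\alpha,\beta\in M$. Then $M$ is the trivial group.
   Context: $\hat{M}$ is the Pontryagin dual of $M$, written multiplicatively; for $\alpha\in M$, $x\in\hat{M}$, $\alpha(x)$ is the value of the character $x$ at $\alpha$. $\delta(\alpha)=1$ if $\alpha$ is the identity of $M$ and $0$ otherwise. A Jacobi function on $M$ is a function $J\colon M\times M\to\mathbf{C}$ satisfying: (A) $J(\alpha,\beta)=J(\beta,\alpha)$; (B) with $J^*(\alpha,\beta)=-\delta(\alpha)-\delta(\beta)+J(\alpha,\beta)$, $J^*(\alpha,\beta)J^*(\alpha\beta,\gamma)=J^*(\alpha,\beta\gamma)J^*(\beta,\gamma)$; (C) $\sum_{\beta\in M}J(\alpha_1\beta,\alpha_2\beta^{-1})J(\alpha_3\beta,\alpha_4\beta^{-1})=J(\alpha_1\alpha_4,\alpha_2\alpha_3)$; all for all elements of $M$. *)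

(* Defs.v *)
From mathcomp Require Import all_boot all_order all_algebra all_fingroup all_solvable all_field all_character.
Set Implicit Arguments. Unset Strict Implicit. Unset Printing Implicit Defensive.
Import GRing.Theory Num.Theory.
Local Open Scope ring_scope.

Definition delta (gT : finGroupType) (a : gT) : algC := (a == 1%g)%:R.

Definition Jstar (gT : finGroupType) (J : gT -> gT -> algC) (a b : gT) : algC :=
  - delta a - delta b + J a b.

(* Jacobi function on M, conditions (A), (B), (C). *)
Definition jacobi_function (gT : finGroupType) (J : gT -> gT -> algC) : Prop :=
  [/\ (forall a b : gT, J a b = J b a),
      (forall a b c : gT,
          Jstar J a b * Jstar J (a * b)%g c = Jstar J a (b * c)%g * Jstar J b c)
    & (forall a1 a2 a3 a4 : gT,
          \sum_(b : gT) J (a1 * b)%g (a2 * b^-1)%g * J (a3 * b)%g (a4 * b^-1)%g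
          = J (a1 * a4)%g (a2 * a3)%g)].

(* Main.v *)
Require Import Defs.
From mathcomp Require Import all_boot all_order all_algebra all_fingroup all_solvable all_field all_character.
From mathcomp Require Import ring.
Import GRing.Theory Num.Theory.
Local Open Scope ring_scope.
Set Implicit Arguments. Unset Strict Implicit.

Lemma lin_ab (gT : finGroupType) (hab : abelian [set: gT]) (x : Iirr [set: gT]) :
  'chi_x \is a linear_char.
Proof. exact: (char_abelianP _ hab). Qed.

Lemma chiM (gT : finGroupType) (hab : abelian [set: gT]) (x : Iirr [set: gT]) (a b : gT) :
  'chi_x (a * b)%g = 'chi_x a * 'chi_x b.
Proof. by rewrite (lin_charM (lin_ab hab x)) ?inE. Qed.

Lemma chiC1 (gT : finGroupType) (hab : abelian [set: gT]) (x : Iirr [set: gT]) (a : gT) :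
  'chi_x a * ('chi_x a)^* = 1.
Proof.
have := congr1 (fun f : 'CF([set: gT]) => f a) (mul_conjC_lin_char (lin_ab hab x)).
by rewrite /= !cfunE cfun1E inE.
Qed.

Lemma chiV (gT : finGroupType) (hab : abelian [set: gT]) (x : Iirr [set: gT]) (a : gT) :
  'chi_x a^-1%g = ('chi_x a)^*.
Proof. by rewrite (lin_charV_conj (lin_ab hab x)) ?inE. Qed.

Lemma chi1 (gT : finGroupType) (hab : abelian [set: gT]) (x : Iirr [set: gT]) :
  'chi_x 1%g = 1.
Proof. exact: lin_char1 (lin_ab hab x). Qed.

Lemma orth (gT : finGroupType) (u v : Iirr [set: gT]) :
  \sum_(a : gT) 'chi_u a * ('chi_v a)^* = #|[set: gT]|%:R * (u == v)%:R.
Proof.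
have := cfdot_irr u v; rewrite cfdotE => H.
have m0 : (#|[set: gT]|%:R : algC) != 0 by rewrite pnatr_eq0 -lt0n cardG_gt0.
rewrite -H mulrA mulfV // mul1r.
by apply: eq_bigl => a; rewrite inE.
Qed.

Lemma orth0 (gT : finGroupType) (u : Iirr [set: gT]) :
  \sum_(a : gT) 'chi_u a = #|[set: gT]|%:R * (u == 0)%:R.
Proof.
rewrite -orth; apply: eq_bigr => a _.
by rewrite irr0 cfun1E inE conjC1 mulr1.
Qed.

Lemma colsum (gT : finGroupType) (hab : abelian [set: gT]) (a : gT) :
  \sum_(x : Iirr [set: gT]) 'chi_x a = #|[set: gT]|%:R * (a == 1%g)%:R.
Proof.
have := congr1 (fun f : 'CF([set: gT]) => f a) (cfReg_sum [set: gT]).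
rewrite /= cfRegE sum_cfunE => H.
rewrite mulr_natr H; apply: eq_bigr => x _.
by rewrite cfunE chi1 // mul1r.
Qed.


Lemma fact2 (T : finType) (A B : T -> algC) :
  \sum_a \sum_b A a * B b = (\sum_a A a) * (\sum_b B b).
Proof. by rewrite big_distrl; apply: eq_bigr => a _; rewrite big_distrr. Qed.

Lemma sum_delta (T : finGroupType) (F : T -> algC) :
  \sum_a (a == 1%g)%:R * F a = F 1%g.
Proof.
rewrite (bigD1 1%g) //= eqxx mul1r big1 ?addr0 // => a /negbTE ->.
by rewrite mul0r.
Qed.

Lemma sum_delta_r (T : finGroupType) (F : T -> algC) :
  \sum_a F a * (a == 1%g)%:R = F 1%g.
Proof. rewrite -(sum_delta F); apply: eq_bigr => a _; exact: mulrC. Qed.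

Lemma Lf (gT : finGroupType) (i : Iirr [set: gT] -> Iirr [set: gT])
  (Hi : forall x : Iirr [set: gT], 'chi_(i x) = 'chi_x * 'chi_(i (conjC_Iirr x)))
  x (a : gT) : 'chi_(i x) a = 'chi_x a * 'chi_(i (conjC_Iirr x)) a.
Proof. by rewrite {1}Hi cfunE. Qed.

Lemma Lh (gT : finGroupType) (hab : abelian [set: gT]) (i : Iirr [set: gT] -> Iirr [set: gT])
  (Hi : forall x : Iirr [set: gT], 'chi_(i x) = 'chi_x * 'chi_(i (conjC_Iirr x)))
  x (a : gT) : ('chi_(i x) a)^* * 'chi_(i (conjC_Iirr x)) a = ('chi_x a)^*.
Proof.
rewrite (Lf Hi) rmorphM /=.
have h := chiC1 hab (i (conjC_Iirr x)) a.
set F := 'chi_(i (conjC_Iirr x)) a in h *.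
by rewrite -mulrA [F^* * F]mulrC h mulr1.
Qed.

Lemma Lk (gT : finGroupType) (hab : abelian [set: gT]) (i : Iirr [set: gT] -> Iirr [set: gT])
  (Hi : forall x : Iirr [set: gT], 'chi_(i x) = 'chi_x * 'chi_(i (conjC_Iirr x)))
  x (a : gT) : 'chi_(i x) a * ('chi_(i (conjC_Iirr x)) a)^* = 'chi_x a.
Proof.
by rewrite (Lf Hi) -mulrA chiC1 // mulr1.
Qed.

Lemma HJ' (gT : finGroupType) (hab : abelian [set: gT]) (J : gT -> gT -> algC)
  (i : Iirr [set: gT] -> Iirr [set: gT])
  (Hi : forall x : Iirr [set: gT], 'chi_(i x) = 'chi_x * 'chi_(i (conjC_Iirr x)))
  (HJ : forall a b : gT,
      J a b = (#|[set: gT]|%:R)^-1 *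
              \sum_(x : Iirr [set: gT])
                 'chi_(i x) a * ('chi_(i x) * 'chi_(conjC_Iirr x)) b) a b :
  J a b = (#|[set: gT]|%:R)^-1 *
     \sum_(x : Iirr [set: gT]) 'chi_(i x) a * 'chi_(i (conjC_Iirr x)) b.
Proof.
rewrite HJ; congr (_ * _); apply: eq_bigr => x _.
rewrite cfunE conjC_IirrE cfunE; congr (_ * _).
rewrite (Lf Hi x b); have h := chiC1 hab x b.
set c := 'chi_x b in h *.
by rewrite mulrC mulrA [c^* * c]mulrC h mul1r.
Qed.


Definition mG (gT : finGroupType) : algC := #|[set: gT]|%:R.

Lemma mG_neq0 (gT : finGroupType) : mG gT != 0.
Proof. by rewrite /mG pnatr_eq0 -lt0n cardG_gt0. Qed.

Definition HJform (gT : finGroupType) (J : gT -> gT -> algC)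
  (i : Iirr [set: gT] -> Iirr [set: gT]) :=
  forall a b : gT, J a b = (mG gT)^-1 *
     \sum_(x : Iirr [set: gT]) 'chi_(i x) a * 'chi_(i (conjC_Iirr x)) b.

Lemma W1 (gT : finGroupType) (J : gT -> gT -> algC)
  (i : Iirr [set: gT] -> Iirr [set: gT]) (HJ : HJform J i) (u v : Iirr [set: gT]) :
  \sum_(a : gT) \sum_(b : gT) J a b * (('chi_u a)^* * ('chi_v b)^*) =
  mG gT * \sum_(x : Iirr [set: gT]) (i x == u)%:R * (i (conjC_Iirr x) == v)%:R.
Proof.
transitivity (\sum_(x : Iirr [set: gT]) (mG gT)^-1 *
   ((\sum_(a : gT) 'chi_(i x) a * ('chi_u a)^*) *
    (\sum_(b : gT) 'chi_(i (conjC_Iirr x)) b * ('chi_v b)^*))).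
  transitivity (\sum_(a : gT) \sum_(b : gT) \sum_(x : Iirr [set: gT]) (mG gT)^-1 *
     (('chi_(i x) a * ('chi_u a)^*) * ('chi_(i (conjC_Iirr x)) b * ('chi_v b)^*))).
    apply: eq_bigr => a _; apply: eq_bigr => b _.
    rewrite HJ mulr_sumr big_distrl /=; apply: eq_bigr => x _; ring.
  rewrite (eq_bigr (fun a => \sum_(x : Iirr [set: gT]) \sum_(b : gT) (mG gT)^-1 *
     (('chi_(i x) a * ('chi_u a)^*) * ('chi_(i (conjC_Iirr x)) b * ('chi_v b)^*)))); last first.
    by move=> a _; rewrite exchange_big.
  rewrite exchange_big /=; apply: eq_bigr => x _.
  rewrite -fact2 mulr_sumr; apply: eq_bigr => a _; by rewrite mulr_sumr.
rewrite mulr_sumr; apply: eq_bigr => x _; rewrite !orth -/(mG gT).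
by field; exact: mG_neq0.
Qed.

Lemma conj_sum_chi (gT : finGroupType) (v : Iirr [set: gT]) :
  \sum_(b : gT) ('chi_v b)^* = mG gT * (v == 0)%:R.
Proof.
by rewrite -rmorph_sum /= orth0 rmorphM /= !conjC_nat.
Qed.

Lemma W2 (gT : finGroupType) (hab : abelian [set: gT]) (u v : Iirr [set: gT]) :
  \sum_(a : gT) \sum_(b : gT) (a == 1%g)%:R * (('chi_u a)^* * ('chi_v b)^*) =
  mG gT * (v == 0)%:R.
Proof.
rewrite (eq_bigr (fun a => (a == 1%g)%:R * (('chi_u a)^* * \sum_b ('chi_v b)^*))).
  by rewrite sum_delta chi1 // conjC1 mul1r conj_sum_chi.
by move=> a _; rewrite !mulr_sumr.
Qed.

Lemma W3 (gT : finGroupType) (hab : abelian [set: gT]) (u v : Iirr [set: gT]) :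
  \sum_(a : gT) \sum_(b : gT) (b == 1%g)%:R * (('chi_u a)^* * ('chi_v b)^*) =
  mG gT * (u == 0)%:R.
Proof.
rewrite (eq_bigr (fun a => ('chi_u a)^*)) ?conj_sum_chi // => a _.
rewrite (eq_bigr (fun b => (b == 1%g)%:R * (('chi_u a)^* * ('chi_v b)^*))) //.
by rewrite sum_delta chi1 // conjC1 mulr1.
Qed.

Lemma JsW (gT : finGroupType) (hab : abelian [set: gT]) (J : gT -> gT -> algC)
  (i : Iirr [set: gT] -> Iirr [set: gT]) (HJ : HJform J i) (u v : Iirr [set: gT]) :
  \sum_(a : gT) \sum_(b : gT) Jstar J a b * (('chi_u a)^* * ('chi_v b)^*) =
  mG gT * \sum_(x : Iirr [set: gT]) (i x == u)%:R * (i (conjC_Iirr x) == v)%:R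
  - mG gT * (v == 0)%:R - mG gT * (u == 0)%:R.
Proof.
rewrite -(W1 HJ) -(W2 hab u v) -(W3 hab u v) -!sumrB.
apply: eq_bigr => a _; rewrite -!sumrB; apply: eq_bigr => b _.
rewrite /Jstar /delta; ring.
Qed.


Lemma sum_pick (T : finType) (F : T -> algC) (y : T) :
  \sum_x F x * (x == y)%:R = F y.
Proof.
rewrite (bigD1 y) //= eqxx mulr1 big1 ?addr0 // => a /negbTE ->.
by rewrite mulr0.
Qed.

Lemma sum_const_alg (gT : finGroupType) (c : algC) :
  \sum_(g : gT) c = mG gT * c.
Proof. by rewrite sumr_const /mG cardsT mulr_natl. Qed.

Lemma JsS1 (gT : finGroupType) (J : gT -> gT -> algC)
  (i : Iirr [set: gT] -> Iirr [set: gT]) (HJ : HJform J i) (inj_i : injective i)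
  (x1 : Iirr [set: gT]) (hx1 : i (conjC_Iirr x1) = 0) (a : gT) :
  \sum_(g : gT) Jstar J a g = 'chi_(i x1) a - 1 - mG gT * (a == 1%g)%:R.
Proof.
have HJs : \sum_(g : gT) J a g = 'chi_(i x1) a.
  rewrite (eq_bigr (fun g => (mG gT)^-1 * \sum_(x : Iirr [set: gT])
                   'chi_(i x) a * 'chi_(i (conjC_Iirr x)) g)); last by move=> g _; rewrite HJ.
  rewrite -mulr_sumr exchange_big /=.
  rewrite (eq_bigr (fun x => 'chi_(i x) a * (mG gT * (x == x1)%:R))).
    rewrite (eq_bigr (fun x => mG gT * ('chi_(i x) a * (x == x1)%:R))); last by move=> x _; ring.
    by rewrite -mulr_sumr sum_pick mulrA mulVf ?mG_neq0 // mul1r.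
  move=> x _; rewrite -mulr_sumr orth0 -/(mG gT); congr (_ * (_ * _)).
  by rewrite -hx1 (inj_eq inj_i) (can_eq conjC_IirrK).
have D : \sum_(g : gT) ((g == 1%g)%:R : algC) = 1.
  by rewrite -[RHS](@sum_delta gT (fun _ => 1)); apply: eq_bigr => g _; rewrite mulr1.
rewrite /Jstar /delta !big_split /= !sumrN D HJs sum_const_alg; ring.
Qed.


Lemma JsTb (gT : finGroupType) (hab : abelian [set: gT]) (J : gT -> gT -> algC)
  (i : Iirr [set: gT] -> Iirr [set: gT]) (HJ : HJform J i)
  (Hi : forall x : Iirr [set: gT], 'chi_(i x) = 'chi_x * 'chi_(i (conjC_Iirr x)))
  (b : Iirr [set: gT]) (c : gT) :
  \sum_(g : gT) 'chi_b g * Jstar J (c * g^-1)%g g = 'chi_(i b) c - 'chi_b c - 1.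
Proof.
have HJs : \sum_(g : gT) 'chi_b g * J (c * g^-1)%g g = 'chi_(i b) c.
  transitivity (\sum_(g : gT) \sum_(x : Iirr [set: gT]) (mG gT)^-1 *
      ('chi_(i x) c * ('chi_b g * ('chi_x g)^*))).
    apply: eq_bigr => g _; rewrite HJ mulrCA mulr_sumr mulr_sumr; apply: eq_bigr => x _.
    rewrite chiM // chiV // -(Lh hab Hi x g); ring.
  rewrite exchange_big /=.
  rewrite (eq_bigr (fun x => (mG gT)^-1 * 'chi_(i x) c * (mG gT * (x == b)%:R))).
    rewrite (eq_bigr (fun x => 'chi_(i x) c * (x == b)%:R)) ?sum_pick // => x _.
    by field; exact: mG_neq0.
  move=> x _; rewrite {2}/mG eq_sym -orth -/(mG gT) mulr_sumr; apply: eq_bigr => g _.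
  ring.
have D1 : \sum_(g : gT) 'chi_b g * ((c * g^-1)%g == 1%g)%:R = 'chi_b c.
  rewrite (eq_bigr (fun g => 'chi_b g * (g == c)%:R)) ?sum_pick // => g _.
  by rewrite divg_eq1 eq_sym.
have D2 : \sum_(g : gT) 'chi_b g * (g == 1%g)%:R = 1.
  by rewrite sum_delta_r chi1.
rewrite /Jstar /delta.
rewrite (eq_bigr (fun g => - ('chi_b g * ((c * g^-1)%g == 1%g)%:R) - 'chi_b g * (g == 1%g)%:R
     + 'chi_b g * J (c * g^-1)%g g)); last by move=> g _; ring.
by rewrite !big_split /= !sumrN D1 D2 HJs; ring.
Qed.

Lemma JsJinv (gT : finGroupType) (hab : abelian [set: gT]) (J : gT -> gT -> algC)
  (i : Iirr [set: gT] -> Iirr [set: gT]) (HJ : HJform J i)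
  (Hi : forall x : Iirr [set: gT], 'chi_(i x) = 'chi_x * 'chi_(i (conjC_Iirr x)))
  (a : gT) : Jstar J a a^-1%g = - delta a.
Proof.
rewrite /Jstar; have -> : J a a^-1%g = delta a.
  rewrite HJ (eq_bigr (fun x => 'chi_x a)); last by move=> x _; rewrite chiV // Lk.
  by rewrite colsum // -/(mG gT) mulrA mulVf ?mG_neq0 // mul1r /delta.
by rewrite /delta invg_eq1; ring.
Qed.


Lemma MainRed (gT : finGroupType) (hab : abelian [set: gT]) (J : gT -> gT -> algC)
  (i : Iirr [set: gT] -> Iirr [set: gT]) (HJ : HJform J i) (inj_i : injective i)
  (Hi : forall x : Iirr [set: gT], 'chi_(i x) = 'chi_x * 'chi_(i (conjC_Iirr x)))
  (HB : forall a b c : gT,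
          Jstar J a b * Jstar J (a * b)%g c = Jstar J a (b * c)%g * Jstar J b c)
  (x1 : Iirr [set: gT]) (hx1 : i (conjC_Iirr x1) = 0)
  (p : gT -> algC) (b : Iirr [set: gT]) :
  \sum_(a : gT) \sum_(c : gT) p a * ('chi_b c)^* * Jstar J a c *
    ('chi_(i x1) a * 'chi_(i x1) c - mG gT * ((a * c)%g == 1%g)%:R
       - 'chi_(i b) c + 'chi_b c) = 0.
Proof.
apply: big1 => a _.
have E : forall c, 'chi_(i x1) a * 'chi_(i x1) c - mG gT * ((a * c)%g == 1%g)%:R
       - 'chi_(i b) c + 'chi_b c =
   (\sum_(g : gT) Jstar J (a * c)%g g) - \sum_(g : gT) 'chi_b g * Jstar J (c * g^-1)%g g.
  by move=> c; rewrite (JsS1 HJ inj_i hx1) (JsTb hab HJ Hi) chiM //; ring.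
rewrite (eq_bigr (fun c => p a * (('chi_b c)^* * Jstar J a c * \sum_(g : gT) Jstar J (a * c)%g g
     - ('chi_b c)^* * Jstar J a c * \sum_(g : gT) 'chi_b g * Jstar J (c * g^-1)%g g))); last first.
  by move=> c _; rewrite E; ring.
rewrite -mulr_sumr sumrB.
suff -> : \sum_(c : gT) ('chi_b c)^* * Jstar J a c * \sum_(g : gT) Jstar J (a * c)%g g =
          \sum_(c : gT) ('chi_b c)^* * Jstar J a c * \sum_(g : gT) 'chi_b g * Jstar J (c * g^-1)%g g.
  by rewrite subrr mulr0.
transitivity (\sum_(c : gT) \sum_(g : gT) ('chi_b c)^* * (Jstar J a (c * g)%g * Jstar J c g)).
  apply: eq_bigr => c _; rewrite mulr_sumr; apply: eq_bigr => g _.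
  by rewrite -HB mulrA.
rewrite exchange_big /=.
transitivity (\sum_(g : gT) \sum_(c : gT) ('chi_b c)^* * Jstar J a c * ('chi_b g * Jstar J (c * g^-1)%g g)).
  apply: eq_bigr => g _.
  rewrite (reindex_inj (mulIg g^-1%g)) /=; apply: eq_bigr => c _.
  rewrite mulgKV chiM // chiV // rmorphM /= conjCK; ring.
rewrite exchange_big /=; apply: eq_bigr => c _; by rewrite mulr_sumr.
Qed.


Lemma mul_eq1_inv (gT : finGroupType) (a c : gT) :
  ((a * c)%g == 1%g) = (c == a^-1)%g.
Proof.
apply/eqP/eqP => [h|->]; last by rewrite mulgV.
by rewrite -(mulKg a c) h mulg1.
Qed.

Lemma DeltaTerm (gT : finGroupType) (hab : abelian [set: gT]) (J : gT -> gT -> algC)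
  (i : Iirr [set: gT] -> Iirr [set: gT]) (HJ : HJform J i)
  (Hi : forall x : Iirr [set: gT], 'chi_(i x) = 'chi_x * 'chi_(i (conjC_Iirr x)))
  (p : gT -> algC) (b : Iirr [set: gT]) :
  \sum_(a : gT) \sum_(c : gT) p a * ('chi_b c)^* * Jstar J a c * (mG gT * ((a * c)%g == 1%g)%:R)
  = - (mG gT * p 1%g).
Proof.
transitivity (\sum_(a : gT) mG gT * (p a * ('chi_b a^-1%g)^* * Jstar J a a^-1%g)).
  apply: eq_bigr => a _.
  rewrite (eq_bigr (fun c => mG gT * (p a * ('chi_b c)^* * Jstar J a c) * (c == a^-1%g)%:R)).
    by rewrite sum_pick.
  by move=> c _; rewrite mul_eq1_inv; ring.
rewrite (eq_bigr (fun a => (a == 1%g)%:R * (- (mG gT * p a * ('chi_b a^-1%g)^*)))).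
  by rewrite sum_delta invg1 chi1 // conjC1 mulr1.
by move=> a _; rewrite (JsJinv hab HJ Hi) /delta; ring.
Qed.

Lemma Wy (gT : finGroupType) (hab : abelian [set: gT]) (J : gT -> gT -> algC)
  (i : Iirr [set: gT] -> Iirr [set: gT]) (HJ : HJform J i) (inj_i : injective i)
  (y v : Iirr [set: gT]) :
  \sum_(a : gT) \sum_(b : gT) Jstar J a b * (('chi_(i y) a)^* * ('chi_v b)^*) =
  mG gT * (i (conjC_Iirr y) == v)%:R - mG gT * (v == 0)%:R - mG gT * (i y == 0)%:R.
Proof.
rewrite (JsW hab HJ); congr (_ * _ - _ - _).
rewrite (eq_bigr (fun x => (i (conjC_Iirr x) == v)%:R * (x == y)%:R)) ?sum_pick //.
by move=> x _; rewrite (inj_eq inj_i) mulrC.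
Qed.

Unset Implicit Arguments. Set Strict Implicit.

Theorem mainTheorem13 (gT : finGroupType) (J : gT -> gT -> algC)
    (i : Iirr [set: gT] -> Iirr [set: gT]) :
  abelian [set: gT] ->
  jacobi_function J ->
  bijective i ->
  (forall x : Iirr [set: gT],
      'chi_(i x) = 'chi_x * 'chi_(i (conjC_Iirr x))) ->
  (forall a b : gT,
      J a b = (#|[set: gT]|%:R)^-1 *
              \sum_(x : Iirr [set: gT])
                 'chi_(i x) a * ('chi_(i x) * 'chi_(conjC_Iirr x)) b) ->
  [set: gT] = 1%g.
Proof.
move=> hab [_ HB _] ibij Hi HJ0.
have HJ : HJform J i by move=> a b; exact: (HJ' hab Hi HJ0).
have inj_i := bij_inj ibij.
case: ibij => i' iK Ki.
pose x0 := i' 0; pose x1 := conjC_Iirr x0.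
have hx1 : i (conjC_Iirr x1) = 0 by rewrite /x1 conjC_IirrK /x0 Ki.
have fix1 : i x1 = x1.
  apply: irr_inj; rewrite Hi hx1 irr0 mulr1 //.
have fixu : forall z, i z = z -> z = x1.
  move=> z hz.
  have h1 : 'chi_(i (conjC_Iirr z)) = 1.
    have := Hi z; rewrite hz => h.
    have hc : 'chi_(conjC_Iirr z) * 'chi_z = 1.
      by rewrite mulrC conjC_IirrE mul_conjC_lin_char // lin_ab.
    by rewrite -[LHS]mul1r -hc -mulrA -h.
  have : i (conjC_Iirr z) = i (conjC_Iirr x1) by rewrite hx1; apply/eqP; rewrite -irr_eq1 h1.
  by move/inj_i/(can_inj conjC_IirrK).
have m0 := mG_neq0 gT.
apply/eqP; apply: contraT => Gn1.
have [x1_0 | x1n0] := eqVneq x1 0.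
-
  have i00 : i 0 = 0 by rewrite -{1 2}x1_0 fix1.
  have [y yn0] : exists y : Iirr [set: gT], y != 0.
    have : (1 < #|Iirr [set: gT]|)%N.
      rewrite card_ord NirrE.
      by move: hab; rewrite card_classes_abelian => /eqP ->; rewrite cardG_gt1.
    case/card_gt1P => u [w [_ _ uw]].
    by case: (eqVneq u 0) => [u0|]; [exists w; rewrite -u0 eq_sym | exists u].
  pose b := i (conjC_Iirr y).
  have Z := MainRed hab HJ inj_i Hi HB hx1 (fun a => ('chi_(i y) a)^*) b.
  pose w := conjC_Iirr (i (conjC_Iirr b)).
  have E : forall a c : gT,
    ('chi_(i y) a)^* * ('chi_b c)^* * Jstar J a c *
      ('chi_(i x1) a * 'chi_(i x1) c - mG gT * ((a * c)%g == 1%g)%:R - 'chi_(i b) c + 'chi_b c) =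
    Jstar J a c * (('chi_(i y) a)^* * ('chi_b c)^*)
    - ('chi_(i y) a)^* * ('chi_b c)^* * Jstar J a c * (mG gT * ((a * c)%g == 1%g)%:R)
    - Jstar J a c * (('chi_(i y) a)^* * ('chi_w c)^*)
    + Jstar J a c * (('chi_(i y) a)^* * ('chi[[set: gT]]_0 c)^*).
    move=> a c; rewrite fix1 x1_0 irr0 !cfun1E !inE conjC1 mulr1 mul1r.
    rewrite /w conjC_IirrE cfunE conjCK (Lf Hi b c).
    have hB := chiC1 hab b c.
    set B := 'chi_b c in hB *; set F := 'chi_(i (conjC_Iirr b)) c.
    set P := ('chi_(i y) a)^*.
    transitivity (P * B^* * Jstar J a c - P * B^* * Jstar J a c * (mG gT * ((a * c)%g == 1%g)%:R)
        - P * (B * B^*) * Jstar J a c * F + P * (B * B^*) * Jstar J a c); first by have t1 : (true%:R : algC) = 1 by []; rewrite t1; ring.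
    by rewrite hB; ring.
  have Z2 : \sum_(a : gT) \sum_(c : gT) Jstar J a c * (('chi_(i y) a)^* * ('chi_b c)^*)
    - \sum_(a : gT) \sum_(c : gT) ('chi_(i y) a)^* * ('chi_b c)^* * Jstar J a c * (mG gT * ((a * c)%g == 1%g)%:R)
    - \sum_(a : gT) \sum_(c : gT) Jstar J a c * (('chi_(i y) a)^* * ('chi_w c)^*)
    + \sum_(a : gT) \sum_(c : gT) Jstar J a c * (('chi_(i y) a)^* * ('chi[[set: gT]]_0 c)^*) = 0.
    rewrite -[RHS]Z -!sumrB -big_split /=; apply: eq_bigr => a _.
    rewrite -!sumrB -big_split /=; apply: eq_bigr => c _; exact/esym/E.
  rewrite !(Wy hab HJ inj_i) (DeltaTerm hab HJ Hi (fun a => ('chi_(i y) a)^*) b) /= in Z2.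
  have hb0 : (b == 0) = false.
    by rewrite /b -i00 (inj_eq inj_i) conjC_Iirr_eq0 (negbTE yn0).
  have hy0 : (i y == 0) = false by rewrite -i00 (inj_eq inj_i) (negbTE yn0).
  have hw : (b == w) = false.
    apply/negbTE/eqP => h.
    have h2 : i (conjC_Iirr b) = conjC_Iirr b by rewrite {2}h /w conjC_IirrK.
    have := fixu _ h2; rewrite x1_0 => /eqP; rewrite conjC_Iirr_eq0 hb0 //.
  have hw0 : (w == 0) = false.
    by rewrite /w conjC_Iirr_eq0 -i00 (inj_eq inj_i) conjC_Iirr_eq0 hb0.
  rewrite -/b eqxx hb0 hy0 hw hw0 chi1 // conjC1 in Z2.
  have t1 : (true%:R : algC) = 1 by []. have f0 : (false%:R : algC) = 0 by [].
  rewrite t1 f0 in Z2.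
  have Z' : mG gT = 0 by rewrite -[RHS]Z2; ring.
  by move/eqP: Z'; rewrite (negbTE m0).
-
  have Z := MainRed hab HJ inj_i Hi HB hx1 (fun a => ('chi_x1 a)^*) x1.
  rewrite fix1 in Z.
  have E : forall a c : gT,
    ('chi_x1 a)^* * ('chi_x1 c)^* * Jstar J a c *
      ('chi_x1 a * 'chi_x1 c - mG gT * ((a * c)%g == 1%g)%:R - 'chi_x1 c + 'chi_x1 c) =
    Jstar J a c * (('chi[[set: gT]]_0 a)^* * ('chi[[set: gT]]_0 c)^*) -
      ('chi_x1 a)^* * ('chi_x1 c)^* * Jstar J a c * (mG gT * ((a * c)%g == 1%g)%:R).
    move=> a c; rewrite irr0 !cfun1E !inE conjC1 mulr1.
    have ha := chiC1 hab x1 a; have hc := chiC1 hab x1 c.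
    set A := 'chi_x1 a in ha *; set C := 'chi_x1 c in hc *.
    have h1 : A^* * C^* * (A * C) = 1.
      by rewrite mulrACA [A^* * A]mulrC ha [C^* * C]mulrC hc mulr1.
    transitivity (A^* * C^* * (A * C) * Jstar J a c -
       A^* * C^* * Jstar J a c * (mG gT * ((a * c)%g == 1%g)%:R)); first by ring.
    by rewrite h1 mul1r mulr1.
  rewrite (eq_bigr (fun a => \sum_(c : gT) (Jstar J a c * (('chi[[set: gT]]_0 a)^* * ('chi[[set: gT]]_0 c)^*) -
      ('chi_x1 a)^* * ('chi_x1 c)^* * Jstar J a c * (mG gT * ((a * c)%g == 1%g)%:R)))) in Z;
    last by move=> a _; apply: eq_bigr => c _; exact: E.
  rewrite (eq_bigr (fun a => \sum_(c : gT) Jstar J a c * (('chi[[set: gT]]_0 a)^* * ('chi[[set: gT]]_0 c)^*) -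
      \sum_(c : gT) ('chi_x1 a)^* * ('chi_x1 c)^* * Jstar J a c * (mG gT * ((a * c)%g == 1%g)%:R))) in Z;
    last by move=> a _; rewrite sumrB.
  rewrite sumrB (JsW hab HJ) (DeltaTerm hab HJ Hi (fun a => ('chi_x1 a)^*) x1) /= in Z.
  have S0 : \sum_(x : Iirr [set: gT]) ((i x == 0)%:R * (i (conjC_Iirr x) == 0)%:R : algC) = 0.
    apply: big1 => x _; have [h|h] := eqVneq (i x) 0; last by rewrite mul0r.
    have -> : x = x0 by rewrite /x0 -h iK.
    by rewrite -/x1 fix1 (negbTE x1n0) mulr0.
  rewrite S0 chi1 // conjC1 in Z.
  have Z' : - mG gT = 0 by rewrite -Z; ring.
  by move/eqP: Z'; rewrite oppr_eq0 (negbTE m0).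
Qed.
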